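(* Let $G=\mathrm{srg}(n,k,\lambda,\mu)$ be a strongly regular graph with $\mu\ge1$. Then $\mathrm{QEC}(G)\le0$ if and only if $k-2\lambda+\mu\le4$. Moreover, $\mathrm{QEC}(G)=0$ if and only if $k-2\lambda+\mu=4$.
   Context: A graph $G=(V,E)$ is finite and simple. It is strongly regular with parameters $\mathrm{srg}(n,k,\lambda,\mu)$ if $|V|=n$, every vertex has exactly $k$ neighbours, every two adjacent vertices have exactly $\lambda$ common neighbours, and every two distinct non-adjacent vertices have exactly $\mu$ common neighbours. The hypothesis $\mu\ge1$ means in particular that there exist distinct non-adjacent vertices (so $G$ is not complete) and that $G$ is connected. For a connected graph $G=(V,E)$ with $|V|\ge2$, let $D=[d(x,y)]_{x,y\in V}$ be its distance matrix ($d$ the graph distance), and define the quadratic embedding constant \[ \mathrm{QEC}(G)=\max\{\langle f,Df\rangle : f\in\mathbb{R}^V,\ \langle f,f\rangle=1,\ \langle \mathbf{1},f\rangle=0\}, \] where $\mathbf 1$ is the all-ones vector and $\langle\cdot,\cdot\rangle$ the standard inner product. *)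

(* Defs.v *)
From HB Require Import structures.
From mathcomp Require Import all_boot all_order all_algebra.
From mathcomp Require Import all_classical all_reals.
Set Implicit Arguments. Unset Strict Implicit. Unset Printing Implicit Defensive.
Import Order.TTheory GRing.Theory Num.Theory.
Local Open Scope classical_set_scope.
Local Open Scope ring_scope.

(* A simple graph: vertex type T : finType, adjacency adj : rel T
   (assumed symmetric and irreflexive in the theorem). *)

Fixpoint reach (T : finType) (adj : rel T) (m : nat) (x y : T) : bool :=
  if m is m'.+1 then reach adj m' x y || [exists z, adj x z && reach adj m' z y]
  else x == y.

(* Graph distance: least m with a walk of length <= m from x to y
   (equal to #|T| when y is not reachable from x; irrelevant for connected graphs,
   where the distance is always < #|T|). *)
Definition gdist (T : finType) (adj : rel T) (x y : T) : nat :=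
  find (fun m => reach adj m x y) (iota 0 #|T|).

Definition srg (T : finType) (adj : rel T) (n k lam mu : nat) : Prop :=
  [/\ #|T| = n,
      forall x, #|[set y | adj x y]| = k,
      forall x y, adj x y -> #|[set z | adj x z && adj y z]| = lam &
      forall x y, x != y -> ~~ adj x y -> #|[set z | adj x z && adj y z]| = mu].

Definition distQF (R : realType) (T : finType) (adj : rel T) (f : T -> R) : R :=
  \sum_(x : T) \sum_(y : T) f x * (gdist adj x y)%:R * f y.

(* QEC(G) = max { <f,Df> : <f,f> = 1, <1,f> = 0 }; the max is attained
   (compact constraint set), so it equals the supremum. *)
Definition QEC (R : realType) (T : finType) (adj : rel T) : R :=
  sup [set distQF adj f | f in [set f : T -> R |
         \sum_(x : T) f x * f x = 1 /\ \sum_(x : T) f x = 0]].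

(* Main.v *)
Require Import Defs.
From HB Require Import structures.
From mathcomp Require Import all_boot all_order all_algebra.
From mathcomp Require Import all_classical all_reals.
From mathcomp Require Import ring lra.
Import Order.TTheory GRing.Theory Num.Theory.
Local Open Scope ring_scope.

Lemma ccard (T : finType) (b : pred T) : #|[set z | b z]%classic| = #|[set z | b z]|.
Proof. apply: eq_card => z. rewrite inE. apply/idP/idP => H.
 by move: H; rewrite in_setE. by rewrite in_setE. Qed.

Definition Aop (R : realType) (T : finType) (adj : rel T) (f : T -> R) (x : T) : R :=
  \sum_y (adj x y)%:R * f y.
Arguments Aop {R T}.

Lemma sum_delta (R : realType) (T : finType) (x : T) (g : T -> R) :
  \sum_y (x == y)%:R * g y = g x.
Proof.
rewrite (bigD1 x) //= eqxx mul1r big1 ?addr0 // => y hy.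
by rewrite eq_sym (negbTE hy) mul0r.
Qed.

Lemma sum_adj_card (R : realType) (T : finType) (adj : rel T) x :
  \sum_y (adj x y)%:R = #|[set y | adj x y]|%:R :> R.
Proof.
rewrite -sum1dep_card natr_sum [RHS]big_mkcond /=; apply: eq_bigr => y _.
by case: (adj x y).
Qed.

Lemma A_lin (R : realType) (T : finType) (adj : rel T) (a b : R) f g x :
  Aop adj (fun w => a * f w + b * g w) x = a * Aop adj f x + b * Aop adj g x.
Proof.
rewrite /Aop !mulr_sumr -big_split /=; apply: eq_bigr => y _; ring.
Qed.

Lemma A_sym (R : realType) (T : finType) (adj : rel T) (f g : T -> R) :
  symmetric adj ->
  \sum_x Aop adj f x * g x = \sum_x f x * Aop adj g x.
Proof.
move=> hs; rewrite /Aop.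
under eq_bigr do rewrite mulr_suml.
under [RHS]eq_bigr do rewrite mulr_sumr.
rewrite exchange_big /=; apply: eq_bigr => x _; apply: eq_bigr => y _.
by rewrite hs; ring.
Qed.

Lemma A_sum (R : realType) (T : finType) (adj : rel T) k (f : T -> R) :
  symmetric adj -> (forall x, #|[set y | adj x y]| = k) ->
  \sum_x Aop adj f x = k%:R * \sum_x f x.
Proof.
move=> hs hk; rewrite /Aop exchange_big mulr_sumr /=; apply: eq_bigr => y _.
rewrite -mulr_suml; congr (_ * _).
under eq_bigr do rewrite hs.
by rewrite sum_adj_card hk.
Qed.

Lemma AA (R : realType) (T : finType) (adj : rel T) (k lam mu : nat) (f : T -> R) x :
  symmetric adj -> irreflexive adj ->
  (forall x, #|[set y | adj x y]| = k) ->
  (forall x y, adj x y -> #|[set z | adj x z && adj y z]| = lam) ->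
  (forall x y, x != y -> ~~ adj x y -> #|[set z | adj x z && adj y z]| = mu) ->
  Aop adj (Aop adj f) x = (k%:R - mu%:R) * f x + (lam%:R - mu%:R) * Aop adj f x
     + mu%:R * \sum_y f y.
Proof.
move=> hs hi hk hl hm.
have ->: Aop adj (Aop adj f) x =
   \sum_y #|[set z | adj x z && adj y z]|%:R * f y.
  rewrite /Aop; under eq_bigr do rewrite mulr_sumr.
  rewrite exchange_big /=; apply: eq_bigr => y _.
  rewrite -sum1dep_card natr_sum [X in X * _]big_mkcond /= mulr_suml; apply: eq_bigr => z _.
  rewrite (hs y z) mulrA -natrM mulnb.
  by case: (adj x z && adj z y).
have hc : forall y, #|[set z | adj x z && adj y z]|%:R =
   (x == y)%:R * (k%:R - mu%:R) + (adj x y)%:R * (lam%:R - mu%:R) + mu%:R :> R.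
  move=> y; case: (eqVneq x y) => [<-|hxy].
    rewrite hi /=.
    have ->: [set z | adj x z && adj x z] = [set z | adj x z].
      by apply/setP => z; rewrite !inE andbb.
    by rewrite hk; ring.
  case hxy': (adj x y).
    by rewrite hl //=; ring.
  by rewrite hm ?hxy' //=; ring.
under eq_bigr do rewrite hc.
rewrite /Aop.
have ->: \sum_y ((x == y)%:R * (k%:R - mu%:R) + (adj x y)%:R * (lam%:R - mu%:R) + mu%:R) * f y
  = (k%:R - mu%:R) * \sum_y (x == y)%:R * f y + (lam%:R - mu%:R) * \sum_y (adj x y)%:R * f y
     + mu%:R * \sum_y f y :> R.
  rewrite !mulr_sumr -!big_split /=; apply: eq_bigr => y _; ring.
by rewrite sum_delta.
Qed.

Lemma find_cons_ (T : Type) (p : pred T) a s :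
  find p (a :: s) = if p a then 0%N else (find p s).+1.
Proof. by []. Qed.

Lemma gdist_eq (T : finType) (adj : rel T) x y : (2 < #|T|)%N ->
  (x != y -> ~~ adj x y -> exists z, adj x z && adj z y) ->
  gdist adj x y = if x == y then 0%N else if adj x y then 1%N else 2%N.
Proof.
move=> hT hz; rewrite /gdist.
move: hT; case: #|T| => [|[|[|m]]] // _.
rewrite (_ : iota 0 m.+3 = [:: 0, 1, 2 & iota 3 m])%N //.
rewrite !find_cons_; cbv beta.
have r0 : reach adj 0 x y = (x == y) by [].
have r1 : reach adj 1 x y = (x == y) || adj x y.
  rewrite /= ; congr orb; apply/existsP/idP => [[z /andP [h /eqP <-]] //|h].
  by exists y; rewrite h eqxx.
rewrite r0 r1.
have [exy|hxy] := eqVneq x y => //.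
case hxy': (adj x y) => //.
have [z /andP [h1 h2]] := hz hxy (negbT hxy').
have -> : reach adj 2 x y.
  rewrite /=; apply/orP; right; apply/existsP; exists z; rewrite h1 /=; apply/orP; right.
  by apply/existsP; exists y; rewrite h2 eqxx.
by [].
Qed.

Lemma distQF_eq (R : realType) (T : finType) (adj : rel T) (f : T -> R) :
  irreflexive adj -> (2 < #|T|)%N ->
  (forall x y, x != y -> ~~ adj x y -> exists z, adj x z && adj z y) ->
  distQF adj f = 2 * (\sum_x f x) ^+ 2 - 2 * \sum_x f x * f x - \sum_x f x * Aop adj f x.
Proof.
move=> hi hT hz; rewrite /distQF.
have hd : forall x y, (gdist adj x y)%:R = 2 - 2 * (x == y)%:R - (adj x y)%:R :> R.
  move=> x y; rewrite gdist_eq //; last exact: hz.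
  have [exy|hxy] := eqVneq x y; first by rewrite exy hi /=; ring.
  idtac.
  by case: (adj x y) => /=; ring.
have inner : forall x, \sum_y f x * (gdist adj x y)%:R * f y =
   2 * f x * \sum_y f y - 2 * (f x * f x) - f x * Aop adj f x.
  move=> x; under eq_bigr do rewrite hd.
  have ->: \sum_y f x * (2 - 2 * (x == y)%:R - (adj x y)%:R) * f y =
     2 * f x * \sum_y f y - 2 * f x * \sum_y (x == y)%:R * f y
       - f x * \sum_y (adj x y)%:R * f y.
    rewrite !mulr_sumr -!sumrB; apply: eq_bigr => y _; ring.
  by rewrite sum_delta /Aop; ring.
under eq_bigr do rewrite inner.
rewrite !sumrB -!mulr_sumr -mulr_suml -mulr_sumr; ring.
Qed.

Lemma CS (R : realType) (T : finType) (f g : T -> R) :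
  \sum_x f x * f x = 1 ->
  (\sum_x f x * g x) ^+ 2 <= \sum_x g x * g x.
Proof.
move=> h1; set b := \sum_x f x * g x.
have : 0 <= \sum_x (b * f x - g x) ^+ 2 by apply: sumr_ge0 => x _; apply: sqr_ge0.
have -> : \sum_x (b * f x - g x) ^+ 2 = b ^+ 2 * \sum_x f x * f x - 2 * b * \sum_x f x * g x + \sum_x g x * g x.
  rewrite (@mulr_sumr _ _ _ _ _ (b ^+ 2)) (@mulr_sumr _ _ _ _ _ (2 * b)) -sumrB -big_split /=.
  apply: eq_bigr => x _; ring.
rewrite h1 -/b; lra.
Qed.

Lemma sum_delta1 (R : realType) (T : finType) (x : T) :
  \sum_y (x == y)%:R = 1 :> R.
Proof.
rewrite -[RHS](@sum_delta R T x (fun=> (1 : R))); apply: eq_bigr => y _; by rewrite mulr1.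
Qed.

Lemma A_scale (R : realType) (T : finType) (adj : rel T) (c : R) f x :
  Aop adj (fun w => c * f w) x = c * Aop adj f x.
Proof. rewrite /Aop mulr_sumr; apply: eq_bigr => y _; ring. Qed.

Theorem theorem1p2 (R : realType) (T : finType) (adj : rel T) (n k lam mu : nat) :
  symmetric adj -> irreflexive adj ->
  srg adj n k lam mu -> (1 <= mu)%N ->
  (exists x y : T, x != y /\ ~~ adj x y) ->
  (QEC R adj <= 0 <-> (k%:R - 2 * lam%:R + mu%:R <= 4 :> R)) /\
  (QEC R adj = 0 <-> (k%:R - 2 * lam%:R + mu%:R = 4 :> R)).
Proof.
move=> hs hi [hn hk0 hl0 hm0] hmu [x0 [y0 [hxy0 hna0]]].
have hk : forall x, #|[set y | adj x y]| = k.
  by move=> x; rewrite -(hk0 x) ccard.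
have hl : forall x y, adj x y -> #|[set z | adj x z && adj y z]| = lam.
  by move=> x y h; rewrite -(hl0 x y h) ccard.
have hm : forall x y, x != y -> ~~ adj x y -> #|[set z | adj x z && adj y z]| = mu.
  by move=> x y h1 h2; rewrite -(hm0 x y h1 h2) ccard.
have hz : forall x y, x != y -> ~~ adj x y -> exists z, adj x z && adj z y.
  move=> x y h1 h2.
  have : (0 < #|[set z | adj x z && adj y z]|)%N by rewrite hm.
  rewrite card_gt0 => /set0Pn [z]; rewrite inE => /andP [a b].
  by exists z; rewrite a (hs z y) b.
have [z0 /andP [hxz hzy]] := hz x0 y0 hxy0 hna0.
have hzx : z0 != x0.
  by apply/eqP => e; move: hxz; rewrite e hi.
have hzy' : z0 != y0.
  by apply/eqP => e; move: hzy; rewrite e hi.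
have hT : (2 < #|T|)%N.
  have : (size [:: x0; y0; z0] <= #|T|)%N.
    rewrite cardE; apply: uniq_leq_size.
      by rewrite /= !inE negb_or hxy0 eq_sym hzx eq_sym hzy'.
    by move=> w _; rewrite mem_enum.
  by [].
have hmk : (mu <= k)%N.
  rewrite -(hm x0 y0 hxy0 hna0) -(hk x0); apply: subset_leq_card.
  by apply/fintype.subsetP => z; rewrite !inE => /andP [->].
have he0 : 0 <= k%:R - mu%:R :> R by rewrite subr_ge0 ler_nat.
have [r [s [hr1 hr2 hr3 hr4]]] : exists r s : R,
    [/\ r + s = lam%:R - mu%:R, r * s = - (k%:R - mu%:R), 0 <= r & s <= r].
  set d := lam%:R - mu%:R : R; set e := k%:R - mu%:R : R.
  have hD : 0 <= d ^+ 2 + 4 * e by rewrite addr_ge0 ?sqr_ge0 // mulr_ge0.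
  have hq := sqr_sqrtr hD; have hq0 := sqrtr_ge0 (d ^+ 2 + 4 * e).
  set q := Num.sqrt _ in hq hq0.
  exists ((d + q) / 2), ((d - q) / 2).
  have h1 : (d + q) / 2 + (d - q) / 2 = d by field.
  have h2 : (d + q) / 2 * ((d - q) / 2) = - e.
    transitivity ((d ^+ 2 - q ^+ 2) / 4); first by field.
    by rewrite hq; field.
  have h3 : 0 <= (d + q) / 2.
    have hdq : d ^+ 2 <= q ^+ 2 by rewrite hq lerDl mulr_ge0.
    have : d <= q.
      case: (lerP d 0) => hd0; first lra.
      rewrite -ler_sqr // ?nnegrE //; lra.
    have : - d <= q.
      case: (lerP d 0) => hd0; last lra.
      rewrite -ler_sqr ?nnegrE ?sqrrN //; lra.
    move=> h3 h4; apply: divr_ge0 => //; lra.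
  have h4 : (d - q) / 2 <= (d + q) / 2 by rewrite ler_pM2r //; lra.
  by split.
have AAf : forall f : T -> R, \sum_x f x = 0 -> forall x,
    Aop adj (Aop adj f) x = (k%:R - mu%:R) * f x + (lam%:R - mu%:R) * Aop adj f x.
  by move=> f hf x; rewrite (@AA R T adj k lam mu f x hs hi hk hl hm) hf mulr0 addr0.
have ub : forall f : T -> R, \sum_x f x * f x = 1 -> \sum_x f x = 0 ->
    distQF adj f <= - (2 + s).
  move=> f h1 h0; rewrite distQF_eq // h0 h1.
  set b := \sum_x f x * Aop adj f x.
  have hc : \sum_x Aop adj f x * Aop adj f x = (k%:R - mu%:R) + (lam%:R - mu%:R) * b.
    rewrite (@A_sym R T adj _ _ hs).
    under eq_bigr do rewrite AAf //.
    transitivity (\sum_x ((k%:R - mu%:R) * (f x * f x) + (lam%:R - mu%:R) * (f x * Aop adj f x))).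
      by apply: eq_bigr => x _; ring.
    by rewrite big_split /= -!mulr_sumr h1 mulr1.
  have hcs := @CS R T f (Aop adj f) h1; rewrite -/b hc in hcs.
  have hb : s <= b.
    have : (b - r) * (b - s) <= 0.
      have -> : (b - r) * (b - s) = b ^+ 2 - (r + s) * b + r * s by ring.
      rewrite hr1 hr2; lra.
    nra.
  lra.
pose fv := fun w : T => (x0 == w)%:R - (z0 == w)%:R : R.
have hfv0 : \sum_w fv w = 0.
  by rewrite /fv sumrB !sum_delta1 subrr.
pose gv := fun w => Aop adj fv w - r * fv w.
have hgv0 : \sum_w gv w = 0.
  rewrite /gv sumrB (@A_sum R T adj k _ hs hk) -mulr_sumr hfv0; ring.
have hAg : forall w, Aop adj gv w = s * gv w.
  move=> w.
  transitivity (Aop adj (fun w => 1 * Aop adj fv w + (- r) * fv w) w).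
    by rewrite /gv /Aop; apply: eq_bigr => y _; ring.
  rewrite A_lin AAf // /gv.
  have -> : k%:R - mu%:R = - (r * s) :> R by rewrite hr2 opprK.
  rewrite -hr1; ring.
have hgx : gv x0 = - 1 - r.
  have hA : Aop adj fv x0 = -1.
    rewrite /Aop /fv.
    transitivity (\sum_w (x0 == w)%:R * (adj x0 w)%:R - \sum_w (z0 == w)%:R * (adj x0 w)%:R : R).
      by rewrite -sumrB; apply: eq_bigr => w _; ring.
    by rewrite !sum_delta hi hxz /=; ring.
  by rewrite /gv hA /fv eqxx (negbTE hzx) /=; ring.
pose q := \sum_w gv w * gv w.
have hq : 0 < q.
  have : gv x0 * gv x0 <= q.
    rewrite /q (bigD1 x0) //= lerDl; apply: sumr_ge0 => w _; rewrite -expr2; exact: sqr_ge0.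
  rewrite hgx; nra.
pose c := (Num.sqrt q)^-1.
have hc : c * c * q = 1.
  have hs0 : 0 < Num.sqrt q by rewrite sqrtr_gt0.
  have hsq := sqr_sqrtr (ltW hq).
  by rewrite /c -invfM -expr2 hsq mulVf // gt_eqF.
pose hv := fun w => c * gv w.
have hv1 : \sum_w hv w * hv w = 1.
  rewrite -hc /q mulr_sumr; apply: eq_bigr => w _; rewrite /hv; ring.
have hv0 : \sum_w hv w = 0.
  by rewrite /hv -mulr_sumr hgv0 mulr0.
have hvd : distQF adj hv = - (2 + s).
  rewrite distQF_eq // hv0 hv1.
  have -> : \sum_x hv x * Aop adj hv x = s * (c * c * q).
    rewrite /q !mulr_sumr; apply: eq_bigr => w _.
    rewrite /hv A_scale hAg; ring.
  rewrite hc; ring.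
have hQ : QEC R adj = - (2 + s).
  rewrite /QEC.
  set E := (X in sup X = _).
  have hE : E (- (2 + s)) by exists hv.
  have hub : ubound E (- (2 + s)).
    by move=> v [f [h1 h2] <-]; apply: ub.
  apply/le_anti/andP; split.
    by apply: ge_sup => //; exists (- (2 + s)).
  apply: sup_upper_bound => //; split; first by exists (- (2 + s)).
  by exists (- (2 + s)).
have hK : k%:R - 2 * lam%:R + mu%:R = 4 - (2 + r) * (2 + s) :> R.
  have : (2 + r) * (2 + s) = 4 + 2 * (r + s) + r * s by ring.
  rewrite hr1 hr2 => ->; ring.
rewrite hQ hK; split; split => h.
- have h2 : 0 <= 2 + s by lra.
  have : 0 <= (2 + r) * (2 + s) by apply: mulr_ge0 => //; lra.
  lra.
- nra.
- have -> : s = -2 by lra.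
  ring.
- have : (2 + r) * (2 + s) = 0 by lra.
  move/eqP; rewrite mulf_eq0 => /orP [/eqP h1|/eqP h1]; lra.
Qed.
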